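(* Let $\mathcal A=(S,R_0)$ be an argumentation network with joint attacks, where $S\neq\varnothing$ and $R_0\subseteq(2^S\setminus\{\varnothing\})\times S$, such that every $x\in S$ is attacked by finitely many sets $G$ (with $GR_0x$) and every such $G$ is finite. Regard the elements of $S$ as atoms of $\mathbf{CN}$ and let $\Delta_{\mathcal A}$ consist of the following formulas for every $x\in S$: $$(\textstyle\bigvee_{GR_0x}\bigwedge_{z\in G}z)\to Nx,\qquad x\leftrightarrow \bigwedge_{GR_0x}\bigvee_{z\in G}Nz,$$ $$\textstyle\bigwedge_{GR_0x}(\bigvee_{z\in G}\neg z)\wedge\bigl(\bigvee_{GR_0x}\bigwedge_{z\in G}(z\vee\neg Nz)\bigr)\to\neg x\wedge\neg Nx$$ (empty conjunction $\top$, empty disjunction $\bot$). Then the $\mathbf{CN}$-models of $\Delta_{\mathcal A}$ correspond exactly to the legitimate Caminada–Gabbay labellings of $\mathcal A$: for every $\mathbf{CN}$-model $h$ of $\Delta_{\mathcal A}$, the map $\lambda_h$ with $\lambda_h(x)=\mathrm{in}$ if $h(x)=1$, $\mathrm{out}$ if $h(Nx)=1$, $\mathrm{und}$ if $h(x)=h(Nx)=0$ is a legitimate Caminada–Gabbay labelling; and for every legitimate Caminada–Gabbay labelling $\lambda$, the assignment $h_\lambda$ with $h_\lambda(x)=1$ iff $\lambda(x)=\mathrm{in}$ and $h_\lambda(Nx)=1$ iff $\lambda(x)=\mathrm{out}$ is a $\mathbf{CN}$-model of $\Delta_{\mathcal A}$.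
   Context: The logic $\mathbf{CN}$: atomic formulas are $q$ and $Nq$ for basic atoms $q$; formulas use classical connectives; a $\mathbf{CN}$-model is a classical $\{0,1\}$-assignment $h$ to all atoms $q,Nq$ with $h(Nq)=1\Rightarrow h(q)=0$, with classical satisfaction. A legitimate Caminada–Gabbay labelling of $(S,R_0)$ is $\lambda:S\to\{\mathrm{in},\mathrm{out},\mathrm{und}\}$ such that for each $x$: (CG1) $\lambda(x)=\mathrm{in}$ iff either $x$ is attacked by no $G$, or for every $G$ with $GR_0x$ there is $y\in G$ with $\lambda(y)=\mathrm{out}$; (CG2) $\lambda(x)=\mathrm{out}$ iff for some $G$ with $GR_0x$, all $y\in G$ have $\lambda(y)=\mathrm{in}$; (CG3) $\lambda(x)=\mathrm{und}$ iff for every $G$ with $GR_0x$ there is $y\in G$ with $\lambda(y)\neq\mathrm{in}$, and for some $G'$ with $G'R_0x$ every $y\in G'$ has $\lambda(y)\in\{\mathrm{in},\mathrm{und}\}$. *)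

(* Defs.v *)
From Stdlib Require Import List Bool.
Import ListNotations.

Inductive cnatom (S : Type) : Type :=
| Pos : S -> cnatom S
| NAt : S -> cnatom S.
Arguments Pos {S} _.
Arguments NAt {S} _.

Inductive form (S : Type) : Type :=
| FAt : cnatom S -> form S
| FTop : form S
| FBot : form S
| FNeg : form S -> form S
| FAnd : form S -> form S -> form S
| FOr : form S -> form S -> form S
| FImp : form S -> form S -> form S
| FIff : form S -> form S -> form S.
Arguments FAt {S} _.
Arguments FTop {S}.
Arguments FBot {S}.
Arguments FNeg {S} _.
Arguments FAnd {S} _ _.
Arguments FOr {S} _ _.
Arguments FImp {S} _ _.
Arguments FIff {S} _ _.

Definition BigAnd {S A : Type} (l : list A) (f : A -> form S) : form S :=
  fold_right (fun a acc => FAnd (f a) acc) FTop l.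
Definition BigOr {S A : Type} (l : list A) (f : A -> form S) : form S :=
  fold_right (fun a acc => FOr (f a) acc) FBot l.

Fixpoint sat {S : Type} (h : cnatom S -> bool) (f : form S) : Prop :=
  match f with
  | FAt a => h a = true
  | FTop => True
  | FBot => False
  | FNeg g => ~ sat h g
  | FAnd g k => sat h g /\ sat h k
  | FOr g k => sat h g \/ sat h k
  | FImp g k => sat h g -> sat h k
  | FIff g k => sat h g <-> sat h k
  end.

Definition CN_assignment {S : Type} (h : cnatom S -> bool) : Prop :=
  forall q, h (NAt q) = true -> h (Pos q) = false.

Definition models {S : Type} (h : cnatom S -> bool) (Delta : form S -> Prop) : Prop :=
  forall f, Delta f -> sat h f.

Definition CN_model_of {S : Type} (h : cnatom S -> bool) (Delta : form S -> Prop) : Prop :=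
  CN_assignment h /\ models h Delta.

(* att x : a finite list enumerating the (finite) attacking sets G with G R0 x,
   each G given by a finite list of its elements. *)
Definition atomP {S} (z : S) : form S := FAt (Pos z).
Definition atomN {S} (z : S) : form S := FAt (NAt z).

Definition Delta1 {S} (att : S -> list (list S)) (x : S) : form S :=
  FImp (BigOr (att x) (fun G => BigAnd G atomP)) (atomN x).
Definition Delta2 {S} (att : S -> list (list S)) (x : S) : form S :=
  FIff (atomP x) (BigAnd (att x) (fun G => BigOr G atomN)).
Definition Delta3 {S} (att : S -> list (list S)) (x : S) : form S :=
  FImp (FAnd (BigAnd (att x) (fun G => BigOr G (fun z => FNeg (atomP z))))
             (BigOr (att x) (fun G => BigAnd G (fun z => FOr (atomP z) (FNeg (atomN z))))))
       (FAnd (FNeg (atomP x)) (FNeg (atomN x))).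

Definition DeltaA {S} (att : S -> list (list S)) : form S -> Prop :=
  fun f => exists x, f = Delta1 att x \/ f = Delta2 att x \/ f = Delta3 att x.

Inductive label := lin | lout | lund.

(* Legitimate Caminada–Gabbay labelling of (S, R0), R0 G x meaning G R0 x. *)
Definition CG_legit {S : Type} (R0 : (S -> Prop) -> S -> Prop) (lam : S -> label) : Prop :=
  forall x,
    (lam x = lin <->
       ((~ exists G, R0 G x) \/
        (forall G, R0 G x -> exists y, G y /\ lam y = lout))) /\
    (lam x = lout <->
       (exists G, R0 G x /\ forall y, G y -> lam y = lin)) /\
    (lam x = lund <->
       ((forall G, R0 G x -> exists y, G y /\ lam y <> lin) /\
        (exists G', R0 G' x /\ forall y, G' y -> (lam y = lin \/ lam y = lund)))).

Definition lambda_of {S} (h : cnatom S -> bool) : S -> label :=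
  fun x => if h (Pos x) then lin else if h (NAt x) then lout else lund.

Definition h_of {S} (lam : S -> label) : cnatom S -> bool :=
  fun a => match a with
           | Pos x => match lam x with lin => true | _ => false end
           | NAt x => match lam x with lout => true | _ => false end
           end.

(* Main.v *)
Require Import Defs.
From Stdlib Require Import List Bool Classical Setoid Morphisms.

Lemma sat_BigAnd {S A} (h : cnatom S -> bool) (l : list A) (f : A -> form S) :
  sat h (BigAnd l f) <-> forall a, In a l -> sat h (f a).
Proof.
  induction l as [|b l IH]; simpl.
  - split; [intros _ a []|auto].
  - rewrite IH. split.
    + intros [H1 H2] a [<-|Ha]; auto.
    + intros H; split; auto.
Qed.

Lemma sat_BigOr {S A} (h : cnatom S -> bool) (l : list A) (f : A -> form S) :
  sat h (BigOr l f) <-> exists a, In a l /\ sat h (f a).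
Proof.
  induction l as [|b l IH]; simpl.
  - split; [intros []|intros [a [[] _]]].
  - rewrite IH. split.
    + intros [H|[a [Ha H]]]; eauto.
    + intros [a [[<-|Ha] H]]; eauto.
Qed.

Section S.
Variables (S : Type) (R0 : (S -> Prop) -> S -> Prop) (att : S -> list (list S)).
Hypothesis Hatt : forall G x, R0 G x <->
            exists2 l, In l (att x) & (forall z, G z <-> In z l).

Lemma L_all x (P : S -> Prop) :
  (forall G, R0 G x -> exists y, G y /\ P y) <->
  (forall l, In l (att x) -> exists y, In y l /\ P y).
Proof.
  split.
  - intros H l Hl. destruct (H (fun z => In z l)) as [y [Hy Py]].
    + apply Hatt. exists l; tauto.
    + eauto.
  - intros H G HG. apply Hatt in HG. destruct HG as [l Hl HGl].
    destruct (H l Hl) as [y [Hy Py]]. exists y. split; auto. apply HGl; auto.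
Qed.

Lemma L_ex x (P : S -> Prop) :
  (exists G, R0 G x /\ forall y, G y -> P y) <->
  (exists l, In l (att x) /\ forall y, In y l -> P y).
Proof.
  split.
  - intros [G [HG H]]. apply Hatt in HG. destruct HG as [l Hl HGl].
    exists l; split; auto. intros y Hy; apply H, HGl; auto.
  - intros [l [Hl H]]. exists (fun z => In z l). split; auto.
    apply Hatt. exists l; tauto.
Qed.


Lemma L_none x (P : S -> Prop) :
  ((~ exists G, R0 G x) \/ (forall G, R0 G x -> exists y, G y /\ P y)) <->
  (forall G, R0 G x -> exists y, G y /\ P y).
Proof.
  split; [|tauto].
  intros [H|H]; auto. intros G HG; exfalso; eauto.
Qed.
End S.

Theorem theorem20 (S : Type) (R0 : (S -> Prop) -> S -> Prop)
  (att : S -> list (list S))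
  (HS : inhabited S)
  (Hnonempty : forall G x, R0 G x -> exists z, G z)
  (Hatt : forall G x, R0 G x <->
            exists2 l, In l (att x) & (forall z, G z <-> In z l)) :
  (forall h : cnatom S -> bool,
      CN_model_of h (DeltaA att) -> CG_legit R0 (lambda_of h)) /\
  (forall lam : S -> label,
      CG_legit R0 lam -> CN_model_of (h_of lam) (DeltaA att)).
Proof.
  split.
  - intros h [HCN Hmod] x.
    assert (D1 := Hmod _ (ex_intro _ x (or_introl eq_refl))).
    assert (D2 := Hmod _ (ex_intro _ x (or_intror (or_introl eq_refl)))).
    assert (D3 := Hmod _ (ex_intro _ x (or_intror (or_intror eq_refl)))).
    unfold Delta1, Delta2, Delta3, atomP, atomN in *; simpl in D1, D2, D3.
    rewrite !sat_BigOr in D1. setoid_rewrite sat_BigAnd in D1.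
    rewrite sat_BigAnd in D2. setoid_rewrite sat_BigOr in D2.
    rewrite sat_BigAnd, sat_BigOr in D3.
    setoid_rewrite sat_BigOr in D3. setoid_rewrite sat_BigAnd in D3.
    simpl in D1, D2, D3.
    assert (Lin : forall y, lambda_of h y = lin <-> h (Pos y) = true).
    { intros y; unfold lambda_of; destruct (h (Pos y)), (h (NAt y)); split; congruence. }
    assert (Lout : forall y, lambda_of h y = lout <-> h (NAt y) = true).
    { intros y; unfold lambda_of; specialize (HCN y).
      destruct (h (Pos y)), (h (NAt y)); split; try congruence; intro H; specialize (HCN eq_refl); congruence. }
    assert (Lund : forall y, lambda_of h y = lund <-> h (Pos y) = false /\ h (NAt y) = false).
    { intros y; unfold lambda_of; destruct (h (Pos y)), (h (NAt y)); split; try congruence;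
      intuition congruence. }
    rewrite (L_none S R0 x).
    rewrite !(L_all S R0 att Hatt), !(L_ex S R0 att Hatt).
    setoid_rewrite Lin. setoid_rewrite Lout. setoid_rewrite Lund.
    try rewrite Lin; try rewrite Lout; try rewrite Lund.
    specialize (HCN x).
    split; [exact D2|split].
    + split.
      * intro HN.
        destruct (classic (exists l, In l (att x) /\ forall y, In y l -> h (Pos y) = true)) as [E|E]; [exact E|].
        exfalso.
        destruct (classic (exists l, In l (att x) /\ forall y, In y l -> h (Pos y) = true \/ h (NAt y) <> true)) as [F|F].
        -- assert (Hall : forall l, In l (att x) -> exists y, In y l /\ h (Pos y) <> true).
           { intros l Hl. apply NNPP; intro C. apply E. exists l; split; auto.
             intros y Hy. apply NNPP; intro C2. apply C. eauto. }
           destruct (D3 (conj Hall F)) as [_ C]. auto.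
        -- assert (Hall : forall l, In l (att x) -> exists y, In y l /\ h (NAt y) = true).
           { intros l Hl. apply NNPP; intro C. apply F. exists l; split; auto.
             intros y Hy. right. intro C2. apply C. eauto. }
           apply D2 in Hall. rewrite (HCN HN) in Hall. discriminate.
      * intro E. apply D1. exact E.
    + split.
      * intros [HP HN].
        split.
        -- intros l Hl. apply NNPP; intro C.
           assert (h (NAt x) = true). { apply D1. exists l; split; auto.
             intros y Hy. apply NNPP; intro C2. apply C. exists y; split; auto.
             }
           congruence.
        -- apply NNPP; intro C.
           assert (h (Pos x) = true).
           { apply D2. intros l Hl. apply NNPP; intro C2. apply C. exists l; split; auto.
             intros y Hy. destruct (h (Pos y)) eqn:EP; [left; reflexivity|].
             right. split; auto. destruct (h (NAt y)) eqn:EN; auto. exfalso; eauto. }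
           congruence.
      * intros [Hall [l [Hl Hl2]]].
        destruct D3 as [C1 C2].
        { split.
          - intros l' Hl'. destruct (Hall l' Hl') as [y [Hy Hy2]]. eauto.
          - exists l; split; auto. intros y Hy. destruct (Hl2 y Hy) as [A|[A B]]; [left; auto|right; congruence]. }
        split; apply not_true_is_false; auto.
  - intros lam Hleg. split.
    + intros q; simpl. destruct (lam q); congruence.
    + intros f [x [-> | [-> | ->]]]; specialize (Hleg x);
      destruct Hleg as [[I1 I2] [[O1 O2] [U1 U2]]];
      rewrite (L_none S R0 x), !(L_all S R0 att Hatt) in I1, I2;
      rewrite !(L_ex S R0 att Hatt) in O1, O2;
      rewrite !(L_all S R0 att Hatt), !(L_ex S R0 att Hatt) in U1, U2;
      unfold Delta1, Delta2, Delta3, atomP, atomN; simpl.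
      * rewrite sat_BigOr. intros [l [Hl H]]. rewrite sat_BigAnd in H. simpl in H.
        rewrite O2; auto. exists l; split; auto. intros y Hy. specialize (H y Hy).
        destruct (lam y); simpl in H; congruence.
      * rewrite sat_BigAnd. setoid_rewrite sat_BigOr. simpl.
        split.
        -- intros H l Hl. destruct (lam x) eqn:E; try discriminate.
           destruct (I1 eq_refl l Hl) as [y [Hy Hy2]]. exists y. rewrite Hy2; auto.
        -- intros H. rewrite I2; auto. intros l Hl. destruct (H l Hl) as [y [Hy Hy2]].
           exists y; split; auto. destruct (lam y); simpl in Hy2; congruence.
      * rewrite sat_BigAnd, sat_BigOr. setoid_rewrite sat_BigOr. setoid_rewrite sat_BigAnd. simpl.
        intros [Hall [l [Hl H]]].
        rewrite U2; [simpl; split; congruence|].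
        split.
        -- intros l' Hl'. destruct (Hall l' Hl') as [y [Hy Hy2]]. exists y; split; auto.
           intro E; rewrite E in Hy2; simpl in Hy2; auto.
        -- exists l; split; auto. intros y Hy. destruct (H y Hy) as [A|A];
           destruct (lam y); simpl in A; auto; congruence.
Qed.
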